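(* Let $(\mathbb V,g,J)$ be a (pseudo-)hermitian vector space and $A$ a hermitian endomorphism. Let $\varphi\in\mathcal K(\mathbb V)$ be an algebraic Kähler curvature tensor whose operator satisfies $[\varphi(X),A]=0$ for all $X\in\mathfrak u(g,J)$ (equivalently $[\varphi(x,y),A]=0$ for all $x,y\in\mathbb V$). Extend $\varphi$ complex-multilinearly to $\mathbb V^{\mathbb C}=\mathbb V\otimes_{\mathbb R}\mathbb C$ and, for each eigenvalue $\lambda$ of $A$, let $\mathbb V_\lambda\subseteq\mathbb V^{\mathbb C}$ be the generalized $\lambda$-eigenspace. Then $\varphi(x,y,u,v)=0$ whenever two of the vectors $x,y,u,v$ lie in $\mathbb V_\lambda$ and $\mathbb V_{\lambda'}$ respectively with $\lambda\ne\lambda'$ (and each of $x,y,u,v$ lies in some generalized eigenspace).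
   Context: (Pseudo-)hermitian vector space $(\mathbb V,g,J)$: nondegenerate symmetric $g$ of any signature, $J^2=-\mathrm{Id}$, $g(J\cdot,J\cdot)=g$; hermitian = $g$-symmetric, $J$-commuting; $\mathfrak u(g,J)$ = $g$-skew endomorphisms commuting with $J$. $\mathcal K(\mathbb V)$ is the space of $R\in\bigotimes^4\mathbb V^*$ with $R(x,y,u,v)=-R(y,x,u,v)=-R(x,y,v,u)$, $R(x,y,u,v)=R(u,v,x,y)$, $R(x,y,u,v)+R(x,v,y,u)+R(x,u,v,y)=0$, $R(x,y,u,v)=R(Jx,Jy,u,v)=R(x,y,Ju,Jv)$. Such $R$ is viewed as $(1,3)$ via $R(x,y,u,v)=g(x,R(u,v)y)$ and as an operator on $\mathfrak u(g,J)$ via $R(u\wedge_Jv)=4R(u,v)$, where $u\wedge v=g(u,\cdot)\otimes v-g(v,\cdot)\otimes u$, $u\wedge_Jv=u\wedge v+Ju\wedge Jv$. *)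

(* Defs.v *)
From HB Require Import structures.
From mathcomp Require Import all_boot all_order all_algebra.
Set Implicit Arguments. Unset Strict Implicit. Unset Printing Implicit Defensive.
Import Order.TTheory GRing.Theory Num.Theory.
Local Open Scope ring_scope.

(* Model: C is a numeric algebraically closed field (a model of the complex
   numbers, e.g. algC); its real elements form a real closed field playing the
   role of R.  The real vector space V = R^n is the set of column vectors in
   'cV[C]_n with real entries; 'cV[C]_n itself is the complexification
   V^C = V (x)_R C.  All real objects (g, J, A, phi) have real entries. *)

Definition realmx (C : numClosedFieldType) m k (M : 'M[C]_(m, k)) : Prop :=
  forall i j, M i j \is Num.real.

Definition realvec (C : numClosedFieldType) n (x : 'cV[C]_n) : Prop := realmx x.

Definition bform (C : numClosedFieldType) n (g : 'M[C]_n) (x y : 'cV[C]_n) : C :=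
  (x^T *m g *m y) 0 0.

Definition pseudo_hermitian (C : numClosedFieldType) n (g J : 'M[C]_n) : Prop :=
  [/\ realmx g, g^T = g & g \in unitmx] /\ [/\ realmx J, J *m J = - (1%:M) & (J^T *m g *m J) = g].

Definition hermitian_endo (C : numClosedFieldType) n (g J A : 'M[C]_n) : Prop :=
  [/\ realmx A, forall x y : 'cV[C]_n, bform g (A *m x) y = bform g x (A *m y)
    & A *m J = J *m A].

(* a 4-tensor on V given by its (real) coefficients; its evaluation is the
   complex-multilinear extension to V^C *)
Definition tensor4 (C : numClosedFieldType) n := 'I_n -> 'I_n -> 'I_n -> 'I_n -> C.

Definition teval (C : numClosedFieldType) n (phi : tensor4 C n) (x y u v : 'cV[C]_n) : C :=
  \sum_(i < n) \sum_(j < n) \sum_(k < n) \sum_(l < n)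
     phi i j k l * x i 0 * y j 0 * u k 0 * v l 0.

Definition kahler_curv (C : numClosedFieldType) n (J : 'M[C]_n) (phi : tensor4 C n) : Prop :=
  (forall i j k l, phi i j k l \is Num.real) /\
  forall x y u v : 'cV[C]_n, realvec x -> realvec y -> realvec u -> realvec v ->
  [/\ teval phi x y u v = - teval phi y x u v,
      teval phi x y u v = - teval phi x y v u
    & teval phi x y u v = teval phi u v x y] /\
  [/\ teval phi x y u v + teval phi x v y u + teval phi x u v y = 0,
      teval phi x y u v = teval phi (J *m x) (J *m y) u v
    & teval phi x y u v = teval phi x y (J *m u) (J *m v)].

Definition basisv (C : numClosedFieldType) n (a : 'I_n) : 'cV[C]_n :=
  \col_i (if i == a then 1 else 0).

(* the endomorphism phi(u,v), defined by phi(x,y,u,v) = g(x, phi(u,v) y) *)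
Definition curv_endo (C : numClosedFieldType) n (g : 'M[C]_n) (phi : tensor4 C n)
  (u v : 'cV[C]_n) : 'M[C]_n :=
  invmx g *m \matrix_(a < n, b < n) teval phi (@basisv C n a) (@basisv C n b) u v.

Definition is_eigenvalue (C : numClosedFieldType) n (A : 'M[C]_n) (lam : C) : Prop :=
  exists2 w : 'cV[C]_n, w != 0 & A *m w = lam *: w.

Definition in_gen_eigenspace (C : numClosedFieldType) n (A : 'M[C]_n) (lam : C)
  (x : 'cV[C]_n) : Prop :=
  exists k : nat, iter k (mulmx (A - lam%:M)) x = 0.

(* Main.v *)
Require Import Defs.
From HB Require Import structures.
From mathcomp Require Import all_boot all_order all_algebra.
From mathcomp Require Import ring.
Import Order.TTheory GRing.Theory Num.Theory.
Local Open Scope ring_scope.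
Set Implicit Arguments. Unset Strict Implicit.

Notation e := (@basisv _ _).
Notation Q n := ('I_n * ('I_n * ('I_n * 'I_n)))%type.

Lemma teval_flat (C : numClosedFieldType) (n : nat) (phi : tensor4 C n) x y u v :
  teval phi x y u v = \sum_(p : Q n) phi p.1 p.2.1 p.2.2.1 p.2.2.2 *
     x p.1 0 * y p.2.1 0 * u p.2.2.1 0 * v p.2.2.2 0.
Proof.
rewrite /teval.
under eq_bigr do under eq_bigr do rewrite pair_big /=.
under eq_bigr do rewrite pair_big /=.
by rewrite pair_big.
Qed.

Lemma basisvE (C : numClosedFieldType) (n : nat) (a : 'I_n) (i : 'I_n) : @basisv C n a i 0 = (i == a)%:R.
Proof. by rewrite mxE; case: (i == a). Qed.

Lemma teval_basis (C : numClosedFieldType) (n : nat) (phi : tensor4 C n) a b c d :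
  teval phi (e a) (e b) (e c) (e d) = phi a b c d.
Proof.
rewrite teval_flat (bigD1 (a,(b,(c,d)))) //= !basisvE !eqxx !mulr1 big1 ?addr0 //.
move=> [i [j [k l]]] /= H; rewrite !basisvE.
have [Ei|] := eqVneq i a; last by move=> _; rewrite !mulr0 ?mul0r.
have [Ej|] := eqVneq j b; last by move=> _; rewrite mulr0 !mul0r.
have [Ek|] := eqVneq k c; last by move=> _; rewrite mulr0 !mul0r.
have [El|] := eqVneq l d; last by move=> _; rewrite mulr0.
by move: H; rewrite Ei Ej Ek El eqxx.
Qed.

Lemma teval_pair (C : numClosedFieldType) (n : nat) (phi : tensor4 C n) (H : forall a b c d, phi a b c d = phi c d a b) x y u v :
  teval phi u v x y = teval phi x y u v.
Proof.
rewrite !teval_flat (reindex_inj (h := fun p : Q n => (p.2.2.1, (p.2.2.2, (p.1, p.2.1))))) /=; last first.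
  by move=> [i [j [k l]]] [i' [j' [k' l']]] /= [-> -> -> ->].
apply: eq_bigr => p _; rewrite H. ring.
Qed.

Lemma teval_bianchi (C : numClosedFieldType) (n : nat) (phi : tensor4 C n)
  (H : forall a b c d, phi a b c d + phi a d b c + phi a c d b = 0) x y u v :
  teval phi x y u v + teval phi x v y u + teval phi x u v y = 0.
Proof.
rewrite !teval_flat [X in _ + X + _](reindex_inj (h := fun p : Q n => (p.1, (p.2.2.2, (p.2.1, p.2.2.1))))) /=; last first.
  by move=> [i [j [k l]]] [i' [j' [k' l']]] /= [-> -> -> ->].
rewrite [X in _ + _ + X](reindex_inj (h := fun p : Q n => (p.1, (p.2.2.1, (p.2.2.2, p.2.1))))) /=; last first.
  by move=> [i [j [k l]]] [i' [j' [k' l']]] /= [-> -> -> ->].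
rewrite -!big_split /= big1 // => p _.
have E := H p.1 p.2.1 p.2.2.1 p.2.2.2.
transitivity ((phi p.1 p.2.1 p.2.2.1 p.2.2.2 + phi p.1 p.2.2.2 p.2.1 p.2.2.1 +
   phi p.1 p.2.2.1 p.2.2.2 p.2.1) * (x p.1 0 * y p.2.1 0 * u p.2.2.1 0 * v p.2.2.2 0)).
  by ring.
by rewrite E mul0r.
Qed.

Lemma orth_key (C : numClosedFieldType) (n : nat) (M A : 'M[C]_n) (lam mu : C)
  (HM : M *m A = A^T *m M) (x y : 'cV[C]_n) :
  (mu - lam) *: (x^T *m M *m y) =
  ((A - lam%:M) *m x)^T *m M *m y - x^T *m M *m ((A - mu%:M) *m y).
Proof.
have E : (A - lam%:M)^T *m M = M *m (A - lam%:M).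
  by rewrite linearB /= tr_scalar_mx mulmxBl mulmxBr HM scalar_mxC.
rewrite trmx_mul -(mulmxA x^T (A - lam%:M)^T) E -!mulmxA -!mulmxBr -mulmxBl.
have -> : A - lam%:M - (A - mu%:M) = (mu - lam)%:M.
  by rewrite opprB addrC addrA subrK raddfB.
by rewrite mul_scalar_mx -!scalemxAr mulmxA.
Qed.

Lemma orth (C : numClosedFieldType) (n : nat) (M A : 'M[C]_n) (lam mu : C)
  (HM : M *m A = A^T *m M) (Hne : lam != mu) :
  forall k m (x y : 'cV[C]_n),
  iter k (mulmx (A - lam%:M)) x = 0 -> iter m (mulmx (A - mu%:M)) y = 0 ->
  x^T *m M *m y = 0.
Proof.
elim=> [|k IHk] m x y; first by move=> /= -> _; rewrite trmx0 !mul0mx.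
elim: m y => [|m IHm] y Hx; first by move=> /= ->; rewrite mulmx0.
move=> Hy; have Hy' := Hy; rewrite iterSr in Hy'.
have := orth_key lam mu HM x y.
rewrite (IHk m.+1 ((A - lam%:M) *m x) y) -?iterSr //.
rewrite (IHm ((A - mu%:M) *m y)) // subrr => /eqP.
have Hd : mu - lam != 0 by rewrite subr_eq0 eq_sym.
by rewrite scaler_eq0 (negPf Hd) /= => /eqP.
Qed.

Definition Mf (C : numClosedFieldType) (n : nat) (phi : tensor4 C n) (u v : 'cV[C]_n) : 'M[C]_n :=
  \matrix_(a < n, b < n) \sum_(k < n) \sum_(l < n) phi a b k l * u k 0 * v l 0.

Lemma teval_mat (C : numClosedFieldType) (n : nat) (phi : tensor4 C n) x y u v :
  teval phi x y u v = (x^T *m Mf phi u v *m y) 0 0.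
Proof.
rewrite /teval mxE.
under [RHS]eq_bigr do rewrite mxE big_distrl /=.
rewrite exchange_big /=; apply: eq_bigr => i _; apply: eq_bigr => j _.
rewrite !mxE big_distrr big_distrl /=; apply: eq_bigr => k _.
rewrite big_distrr big_distrl /=; apply: eq_bigr => l _.
ring.
Qed.

Lemma basisv_delta (C : numClosedFieldType) (n : nat) (a : 'I_n) :
  @basisv C n a = delta_mx a 0.
Proof. by apply/matrixP => i j; rewrite !mxE (ord1 j) eqxx andbT; case: (i == a). Qed.

Lemma ebe (C : numClosedFieldType) (n : nat) (N : 'M[C]_n) i j :
  ((@basisv C n i)^T *m N *m @basisv C n j) 0 0 = N i j.
Proof. by rewrite !basisv_delta trmx_delta -rowE -colE !mxE. Qed.

Lemma gA_sym (C : numClosedFieldType) (n : nat) (g J A : 'M[C]_n) :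
  hermitian_endo g J A -> g *m A = A^T *m g.
Proof.
case=> _ H _; apply/matrixP => i j.
have := H (@basisv C n i) (@basisv C n j).
rewrite /bform trmx_mul -(mulmxA _ A^T g) ebe mulmxA -(mulmxA _ g A) ebe.
by move=> ->.
Qed.

Lemma Mf_sum (C : numClosedFieldType) (n : nat) (phi : tensor4 C n) u v :
  Mf phi u v = \sum_(k < n) \sum_(l < n) (u k 0 * v l 0) *: \matrix_(a < n, b < n) phi a b k l.
Proof.
apply/matrixP => a b; rewrite !mxE summxE; apply: eq_bigr => k _.
rewrite summxE; apply: eq_bigr => l _; rewrite !mxE; ring.
Qed.

Lemma basis_real (C : numClosedFieldType) (n : nat) (a : 'I_n) : realvec (@basisv C n a).
Proof. by move=> i j; rewrite mxE; case: (i == a); rewrite ?real0 ?real1. Qed.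

Lemma Mcomm (C : numClosedFieldType) (n : nat) (g J A : 'M[C]_n) (phi : tensor4 C n) :
  pseudo_hermitian g J -> hermitian_endo g J A ->
  (forall x y : 'cV[C]_n, realvec x -> realvec y ->
     curv_endo g phi x y *m A = A *m curv_endo g phi x y) ->
  forall u v, Mf phi u v *m A = A^T *m Mf phi u v.
Proof.
move=> [[_ _ gU] _] HA Hc u v.
have Hkl : forall k l, (\matrix_(a < n, b < n) phi a b k l) *m A =
                       A^T *m (\matrix_(a < n, b < n) phi a b k l).
  move=> k l; set Mk := \matrix_(a < n, b < n) phi a b k l.
  have := Hc _ _ (basis_real C k) (basis_real C l).
  rewrite /curv_endo.
  have -> : \matrix_(a < n, b < n) teval phi (@basisv C n a) (@basisv C n b) (@basisv C n k) (@basisv C n l) = Mk.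
    by apply/matrixP => a b; rewrite !mxE teval_basis.
  move=> /(congr1 (mulmx g)).
  rewrite !mulmxA (mulmxV gU) mul1mx (gA_sym HA) -(mulmxA A^T) (mulmxV gU) mulmx1.
  done.
rewrite Mf_sum mulmx_suml mulmx_sumr; apply: eq_bigr => k _.
rewrite mulmx_suml mulmx_sumr; apply: eq_bigr => l _.
by rewrite -scalemxAl Hkl scalemxAr.
Qed.

Unset Implicit Arguments. Set Strict Implicit.

Theorem mainTheorem7 (C : numClosedFieldType) (n : nat) (g J A : 'M[C]_n)
  (phi : tensor4 C n) :
  pseudo_hermitian g J ->
  hermitian_endo g J A ->
  kahler_curv J phi ->
  (forall x y : 'cV[C]_n, realvec x -> realvec y ->
     curv_endo g phi x y *m A = A *m curv_endo g phi x y) ->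
  forall (lx ly lu lv : C) (x y u v : 'cV[C]_n),
    is_eigenvalue A lx -> is_eigenvalue A ly ->
    is_eigenvalue A lu -> is_eigenvalue A lv ->
    in_gen_eigenspace A lx x -> in_gen_eigenspace A ly y ->
    in_gen_eigenspace A lu u -> in_gen_eigenspace A lv v ->
    ~ (lx = ly /\ ly = lu /\ lu = lv) ->
    teval phi x y u v = 0.
Proof.
move=> Hg HA [_ Hs] Hc lx ly lu lv x y u v _ _ _ _ [kx Hx] [ky Hy] [ku Hu] [kv Hv] Hne.
have B a b c d := Hs _ _ _ _ (basis_real C a) (basis_real C b) (basis_real C c) (basis_real C d).
have Hpair : forall a b c d, phi a b c d = phi c d a b.
  by move=> a b c d; have [[_ _ E] _] := B a b c d; rewrite !teval_basis in E.
have Hbian : forall a b c d, phi a b c d + phi a d b c + phi a c d b = 0.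
  by move=> a b c d; have [_ [E _ _]] := B a b c d; rewrite !teval_basis in E.
have Z : forall (l1 l2 : C) k1 k2 (w1 w2 w3 w4 : 'cV[C]_n), l1 != l2 ->
    iter k1 (mulmx (A - l1%:M)) w1 = 0 -> iter k2 (mulmx (A - l2%:M)) w2 = 0 ->
    teval phi w1 w2 w3 w4 = 0.
  move=> l1 l2 k1 k2 w1 w2 w3 w4 Hn H1 H2.
  by rewrite teval_mat (orth (Mcomm Hg HA Hc w3 w4) Hn H1 H2) mxE.
case: (eqVneq lx ly) => [exy|nxy]; last exact: Z nxy Hx Hy.
case: (eqVneq lu lv) => [euv|nuv]; last by rewrite -(teval_pair Hpair); exact: Z nuv Hu Hv.
have nxu : lx != lu by apply/eqP => exu; apply: Hne; rewrite -exy.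
have nxv : lx != lv by rewrite -euv.
have := teval_bianchi Hbian x y u v.
by rewrite (Z _ _ _ _ _ _ _ _ nxv Hx Hv) (Z _ _ _ _ _ _ _ _ nxu Hx Hu) !addr0.
Qed.
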